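(* Let $\mathbb{K}$ be an algebraically closed field of characteristic zero and let $Y,Z$ be irreducible affine varieties with $Y\times\mathbb{A}^1\cong Z\times\mathbb{A}^1$. Then $Y$ and $Z$ are of the same type (A, B or C).
   Context: A derivation of $\mathbb{K}[X]$ is locally nilpotent (LND) if every element is killed by some power of it; a slice of an LND $\partial$ is $s$ with $\partial(s)=1$. $\mathrm{HD}^*(X)$ is the subalgebra of $\mathbb{K}[X]$ generated by the kernels of all LNDs of $\mathbb{K}[X]$ having a slice. A variety $Y$ is rigid if $\mathbb{K}[Y]$ has no nonzero LND. For an irreducible affine variety $Y$ with $X=Y\times\mathbb{A}^1$, $\mathbb{K}[X]=\mathbb{K}[Y][u]$: $Y$ is of type A if $\mathrm{HD}^*(X)=\mathbb{K}[X]$; of type B if $\mathrm{HD}^*(X)$ is not finitely generated; of type C if $Y$ is rigid and $\mathrm{HD}^*(X)=\mathbb{K}[Y]$. Every such $Y$ is of exactly one of these types. *)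

(* Defs.v *)
From HB Require Import structures.
From mathcomp Require Import all_boot all_order all_algebra.
Set Implicit Arguments. Unset Strict Implicit. Unset Printing Implicit Defensive.
Import GRing.Theory.
Local Open Scope ring_scope.

(* A commutative ring R together with a structure map c : K -> R
   (the embedding of the ground field). *)
Section Generic.
Variables (K : fieldType) (R : comNzRingType) (c : K -> R).

(* K-derivation: additive, Leibniz rule, kills the constants of K
   (hence K-linear). *)
Definition is_Kderivation (D : R -> R) : Prop :=
  (forall x y, D (x + y) = D x + D y) /\
  (forall x y, D (x * y) = x * D y + D x * y) /\
  (forall k, D (c k) = 0).

Definition is_LND (D : R -> R) : Prop :=
  is_Kderivation D /\ forall x, exists n : nat, iter n D x = 0.

Inductive gen_subalg (S : R -> Prop) : R -> Prop :=
| gen_in x : S x -> gen_subalg S x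
| gen_cst k : gen_subalg S (c k)
| gen_add x y : gen_subalg S x -> gen_subalg S y -> gen_subalg S (x + y)
| gen_mul x y : gen_subalg S x -> gen_subalg S y -> gen_subalg S (x * y).

Definition fin_gen (S : R -> Prop) : Prop :=
  exists s : seq R, (forall x, x \in s -> S x) /\
    (forall x, S x <-> gen_subalg (fun y => y \in s) x).

Definition HDstar : R -> Prop :=
  gen_subalg (fun y => exists D, is_LND D /\ (exists s, D s = 1) /\ D y = 0).

Definition rigid : Prop := forall D, is_LND D -> forall x, D x = 0.
End Generic.

Section Varieties.
Variable K : fieldType.

(* coordinate ring of an irreducible affine variety:
   finitely generated K-algebra that is an integral domain *)
Definition affine_domain (A : comAlgType K) : Prop :=
  (forall a b : A, a * b = 0 -> a = 0 \/ b = 0) /\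
  exists s : seq A, forall x, gen_subalg (fun k : K => k%:A) (fun y => y \in s) x.

(* K[X] = K[Y][u] with structure map k |-> (k%:A)%:P *)
Definition cst_poly (A : comAlgType K) (k : K) : {poly A} := (k%:A)%:P.

Definition typeA (A : comAlgType K) : Prop :=
  forall p : {poly A}, HDstar (@cst_poly A) p.

Definition typeB (A : comAlgType K) : Prop :=
  ~ fin_gen (@cst_poly A) (HDstar (@cst_poly A)).

Definition typeC (A : comAlgType K) : Prop :=
  rigid (fun k : K => k%:A : A) /\
  (forall p : {poly A}, HDstar (@cst_poly A) p <-> exists a : A, p = a%:P).

(* K-algebra isomorphism K[Y][u] ~= K[Z][u]
   (i.e. Y x A^1 ~= Z x A^1) *)
Definition Kalg_iso (A B : comAlgType K) (f : {poly A} -> {poly B}) : Prop :=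
  bijective f /\
  (forall p q, f (p + q) = f p + f q) /\
  (forall p q, f (p * q) = f p * f q) /\
  f 1 = 1 /\
  (forall k : K, f (cst_poly A k) = cst_poly B k).
End Varieties.

(* Main.v *)
Require Import Defs.
From HB Require Import structures.
From mathcomp Require Import all_boot all_order all_algebra.
From mathcomp Require Import zify.
Set Implicit Arguments. Unset Strict Implicit. Unset Printing Implicit Defensive.
Import GRing.Theory.
Local Open Scope ring_scope.

Section Transport.
Variable K : fieldType.

Lemma iso_inv (A B : comAlgType K) (f : {poly A} -> {poly B}) :
  Kalg_iso f -> exists g, Kalg_iso g /\ cancel f g /\ cancel g f.
Proof.
move=> [[g fK gK] [fD [fM [f1 fC]]]].
exists g; split; last by [].
split; first by exists f.
split; first by move=> p q; apply: (can_inj fK); rewrite fD !gK.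
split; first by move=> p q; apply: (can_inj fK); rewrite fM !gK.
split; first by apply: (can_inj fK); rewrite f1 gK.
by move=> k; apply: (can_inj fK); rewrite fC gK.
Qed.

Lemma iso0 (A B : comAlgType K) (f : {poly A} -> {poly B}) :
  Kalg_iso f -> f 0 = 0.
Proof.
move=> [_ [fD _]]; apply: (addrI (f 0)); by rewrite -fD !addr0.
Qed.

Lemma iso_gen (R S : comNzRingType) (cR : K -> R) (cS : K -> S) (f : R -> S)
  (P : R -> Prop) (Q : S -> Prop) :
  (forall p q, f (p + q) = f p + f q) ->
  (forall p q, f (p * q) = f p * f q) ->
  (forall k, f (cR k) = cS k) ->
  (forall x, P x -> Q (f x)) ->
  forall x, gen_subalg cR P x -> gen_subalg cS Q (f x).
Proof.
move=> fD fM fC PQ x; elim=> {x}.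
- by move=> x Px; apply: gen_in; apply: PQ.
- by move=> k; rewrite fC; apply: gen_cst.
- by move=> x y _ hx _ hy; rewrite fD; apply: gen_add.
- by move=> x y _ hx _ hy; rewrite fM; apply: gen_mul.
Qed.

Lemma HD_transport (A B : comAlgType K) (f : {poly A} -> {poly B}) :
  Kalg_iso f -> forall p, HDstar (@cst_poly K A) p -> HDstar (@cst_poly K B) (f p).
Proof.
move=> hf; have [g [hg [fK gK]]] := iso_inv hf.
have f0 := iso0 hf.
move: hf hg => [_ [fD [fM [f1 fC]]]] [_ [gD [gM [g1 gC]]]].
apply: iso_gen => // y [D [[[DD [DM DC]] DN] [[s Ds] Dy]]].
exists (fun x => f (D (g x))); split; last split.
- split; last first.
    move=> x; have [n hn] := DN (g x); exists n.
    suff -> : iter n (fun x0 => f (D (g x0))) x = f (iter n D (g x)).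
      by rewrite hn iso0 //; split; [exists g|].
    by elim: n {hn} => [|n IH] /=; rewrite ?gK // IH fK.
  split; first by move=> a b; rewrite gD DD fD.
  split; first by move=> a b; rewrite gM DM fD !fM !gK.
  by move=> k; rewrite gC DC iso0 //; split; [exists g|].
- by exists (f s); rewrite fK Ds f1.
- by rewrite fK Dy iso0 //; split; [exists g|].
Qed.

End Transport.

Section Types.
Variable K : fieldType.

Lemma typeA_tr (A B : comAlgType K) (f : {poly A} -> {poly B}) :
  Kalg_iso f -> typeA A -> typeA B.
Proof.
move=> hf hA p; have [g [hg [fK gK]]] := iso_inv hf.
by rewrite -(gK p); apply: HD_transport.
Qed.

Lemma gen_mono (R : comNzRingType) (c : K -> R) (P Q : R -> Prop) :
  (forall x, P x -> Q x) -> forall x, gen_subalg c P x -> gen_subalg c Q x.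
Proof.
move=> PQ x; elim=> {x}.
- by move=> x Px; apply: gen_in; apply: PQ.
- by move=> k; apply: gen_cst.
- by move=> x y _ hx _ hy; apply: gen_add.
- by move=> x y _ hx _ hy; apply: gen_mul.
Qed.

Lemma fin_gen_tr (A B : comAlgType K) (f : {poly A} -> {poly B}) :
  Kalg_iso f -> fin_gen (@cst_poly K B) (HDstar (@cst_poly K B)) ->
  fin_gen (@cst_poly K A) (HDstar (@cst_poly K A)).
Proof.
move=> hf [s [hs1 hs2]]; have [g [hg [fK gK]]] := iso_inv hf.
move: (hf) (hg) => [_ [fD [fM [f1 fC]]]] [_ [gD [gM [g1 gC]]]].
exists (map g s); split.
  move=> x /mapP [y ys ->]; apply: HD_transport => //; exact: hs1.
move=> x; split.
  move=> /(HD_transport hf) /hs2 H; rewrite -(fK x).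
  apply: (iso_gen gD gM gC _ H) => y ys; exact: map_f.
move=> H; rewrite -(fK x); apply: HD_transport => //; apply/hs2.
apply: (iso_gen fD fM fC _ H) => y /mapP [w ws ->].
by rewrite gK.
Qed.

End Types.

Section TypeC.
Variable K : fieldType.

Lemma deriv_LND (A : comAlgType K) :
  is_LND (@cst_poly K A) (@deriv A).
Proof.
split.
  split; first by move=> x y; rewrite derivD.
  split; first by move=> x y; rewrite derivM addrC.
  by move=> k; rewrite /cst_poly derivC.
move=> x; exists (size x).
by have := @derivn_poly0 _ x (size x) (leqnn _).
Qed.

Lemma const_HD (A : comAlgType K) (a : A) : HDstar (@cst_poly K A) a%:P.
Proof.
apply: gen_in; exists (@deriv A); split; first exact: deriv_LND.
by split; [exists 'X; rewrite derivX | rewrite derivC].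
Qed.

Lemma size_comp_dom (A : comAlgType K)
  (hA : forall a b : A, a * b = 0 -> a = 0 \/ b = 0) (v : {poly A}) :
  (1 < size v)%N -> forall P : {poly A}, P != 0 ->
  size (P \Po v) = ((size P).-1 * (size v).-1).+1%N.
Proof.
move=> hv; elim/poly_ind => [|Q c IH]; first by rewrite eqxx.
move=> hP; rewrite comp_poly_MXaddC size_MXaddC.
have [hQ0|hQ] := eqVneq Q 0.
  rewrite hQ0 in hP *.
  rewrite comp_poly0 mul0r add0r size_polyC.
  have hc : c != 0 by move: hP; rewrite mul0r add0r polyC_eq0.
  by rewrite /= (negbTE hc) /= size_poly0.
have hQv := IH hQ.
have hm : size ((Q \Po v) * v) = (size (Q \Po v) + size v).-1.
  apply: size_proper_mul; apply/eqP => /hA [] /eqP; rewrite lead_coef_eq0.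
    by rewrite -size_poly_eq0 hQv.
  by rewrite -size_poly_eq0 => /eqP h; rewrite h in hv.
have hQ0 : (0 < size Q)%N by rewrite size_poly_gt0.
rewrite /= size_addl hm hQv.
  move: hQ0 hv; case: (size Q) => // n _; case: (size v) => // [[]] // m _ /=.
  lia.
apply: (leq_ltn_trans (size_polyC_leq1 c)).
move: hv; case: (size v) => // [[]] // m _ /=; lia.
Qed.

End TypeC.

Section TypeC2.
Variable K : fieldType.

Lemma typeC_tr (A B : comAlgType K)
  (hA : forall a b : A, a * b = 0 -> a = 0 \/ b = 0)
  (f : {poly A} -> {poly B}) : Kalg_iso f -> typeC A -> typeC B.
Proof.
move=> hf [rA HA]; have [g [hg [fK gK]]] := iso_inv hf.
have f0 := iso0 hf; have g0 := iso0 hg.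
move: (hf) (hg) => [_ [fD [fM [f1 fC]]]] [_ [gD [gM [g1 gC]]]].
set psi := fun b : B => (g b%:P)`_0.
have gP : forall b : B, g b%:P = (psi b)%:P.
  move=> b; rewrite /psi; have /HA [a ->] := HD_transport hg (const_HD b).
  by rewrite coefC eqxx.
have gsum : forall n (F : 'I_n -> {poly B}),
    g (\sum_(i < n) F i) = \sum_(i < n) g (F i).
  by move=> n F; apply: (big_morph g gD g0).
have gexp : forall p n, g (p ^+ n) = g p ^+ n.
  by move=> p; elim=> [|n IH]; rewrite ?expr0 ?g1 // !exprS gM IH.
set v := g 'X.
have G : forall q : {poly B}, g q = (\poly_(i < size q) psi q`_i) \Po v.
  move=> q; rewrite -{1}(coefK q) !poly_def gsum.
  rewrite (big_morph (comp_poly v) (fun p q => comp_polyD p q v) (comp_poly0 v)).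
  apply: eq_bigr => i _.
  rewrite comp_polyZ rmorphXn /=.
  by rewrite comp_polyX -mul_polyC gM gexp gP -/v mul_polyC.
have hv : (1 < size v)%N.
  rewrite ltnNge; apply/negP => /size1_polyC hv1.
  have E := G (f 'X); rewrite fK hv1 comp_polyCr in E.
  have := congr1 (fun p : {poly A} => size p) E; rewrite /=.
  by rewrite size_polyX size_polyC; case: (_ != 0).
have fb : forall a : A, f a%:P = ((f a%:P)`_0)%:P.
  move=> a; set p := f a%:P.
  have Ha := G p; rewrite /p fK -/p in Ha.
  set P := \poly_(i < size p) psi p`_i in Ha.
  have hP1 : (size P <= 1)%N.
    have [->|hP0] := eqVneq P 0; first by rewrite size_poly0.
    have := size_comp_dom hA hv hP0; rewrite -Ha.
    move: (size_polyC_leq1 a) hv.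
    move: (size a%:P) (size P) (size v) => s1 s2 s3; nia.
  apply/polyP => i; rewrite coefC; case: eqP => [->//|/eqP i0].
  have [lt|ge] := ltnP i (size p); last by rewrite nth_default.
  have : P`_i = 0 by rewrite nth_default // (leq_trans hP1) // lt0n.
  rewrite coef_poly lt => hpsi.
  have : g (p`_i)%:P = 0 by rewrite gP hpsi.
  by move=> /(congr1 f); rewrite gK f0 => /eqP; rewrite polyC_eq0 => /eqP.
split; last first.
  move=> p; split.
    move=> /(HD_transport hg) /HA [a ha]; rewrite -[p]gK ha fb.
    by eexists; reflexivity.
  by move=> [b ->]; exact: const_HD.
move=> D [[DD [DM DC]] DN] x.
set phi := fun a : A => (f a%:P)`_0.
have fP : forall a, f a%:P = (phi a)%:P := fb.
have phiK : forall b, phi (psi b) = b.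
  by move=> b; apply: polyC_inj; rewrite -fP -gP gK.
have psiK : forall a, psi (phi a) = a.
  by move=> a; apply: polyC_inj; rewrite -gP -fP fK.
have psiD : forall x y, psi (x + y) = psi x + psi y.
  by move=> a b; apply: polyC_inj; rewrite polyCD -!gP -gD polyCD.
have psiM : forall x y, psi (x * y) = psi x * psi y.
  by move=> a b; apply: polyC_inj; rewrite polyCM -!gP -gM polyCM.
have phiD : forall x y, phi (x + y) = phi x + phi y.
  by move=> a b; apply: polyC_inj; rewrite polyCD -!fP -fD polyCD.
have phiM : forall x y, phi (x * y) = phi x * phi y.
  by move=> a b; apply: polyC_inj; rewrite polyCM -!fP -fM polyCM.
have psi0 : psi 0 = 0 by apply: polyC_inj; rewrite -gP g0.
have phi0 : phi 0 = 0 by apply: polyC_inj; rewrite -fP f0.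
have phiC : forall k : K, phi (k%:A) = k%:A.
  by move=> k; apply: polyC_inj; rewrite -fP; exact: fC k.
have LND : is_LND (fun k : K => k%:A : A) (fun a => psi (D (phi a))).
  split.
    split; first by move=> a b; rewrite phiD DD psiD.
    split; first by move=> a b; rewrite phiM DM psiD !psiM !psiK.
    by move=> k; rewrite phiC DC psi0.
  move=> a; have [n hn] := DN (phi a); exists n.
  suff -> : iter n (fun a => psi (D (phi a))) a = psi (iter n D (phi a)).
    by rewrite hn psi0.
  by elim: n {hn} => [|n IH] /=; [rewrite psiK | rewrite IH phiK].
have := rA _ LND (psi x); rewrite phiK => h.
by rewrite -[D x]phiK h phi0.
Qed.

End TypeC2.

Theorem corollary3 (K : closedFieldType) (hK : [pchar K] =i pred0)
  (A B : comAlgType K) (hA : affine_domain A) (hB : affine_domain B)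
  (f : {poly A} -> {poly B}) (hf : Kalg_iso f) :
  (typeA A <-> typeA B) /\ (typeB A <-> typeB B) /\ (typeC A <-> typeC B).
Proof.
have [g [hg _]] := iso_inv hf.
split; first by split; [exact: typeA_tr hf | exact: typeA_tr hg].
split; first by split=> H H'; apply: H; [exact: fin_gen_tr hf H' | exact: fin_gen_tr hg H'].
split; [exact: (@typeC_tr K A B (proj1 hA) f hf) | exact: (@typeC_tr K B A (proj1 hB) g hg)].
Qed.
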